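(* Let $G=(V,E)$ be a $D$-regular unweighted Ricci-flat graph with $D\ge2$, and assume $\mu(y)=\mu_0>0$ for all $y\in V$. Then $G$ satisfies CD$(F;0)$ with the CD-function $$F(a)=\frac{D}{\mu_0^2}\exp\Big(-\frac{\mu_0}{D}a\Big)\Big[\Upsilon\Big(\frac{2\mu_0}{D}a\Big)+(D-1)\,\Upsilon\Big(-\frac{2\mu_0}{D(D-1)}a\Big)\Big],\quad a\ge0;$$ that is, $F$ is a (strictly convex) CD-function, and for every $x\in V$ and every $v:V\to\mathbb R$ with $Lv(x)>0$ and $Lv(x)\ge Lv(y)$ for all $y\sim x$ one has $\Delta\Psi_{\Upsilon'}(v)(x)\ge F(Lv(x))$.
   Context: Unweighted means $w_{xy}=1$ for all edges; $D$-regular means every vertex has exactly $D$ neighbours. The Laplacian is $\Delta u(x)=\frac1{\mu(x)}\sum_{y\sim x}(u(y)-u(x))$, $L=-\Delta$, $\Psi_H(v)(x)=\frac1{\mu(x)}\sum_{y\sim x}H(v(y)-v(x))$, $\Upsilon(z)=e^z-1-z$, $\Upsilon'(z)=e^z-1$. A CD-function is a continuous $F:[0,\infty)\to[0,\infty)$ with $F(0)=0$, $F(x)/x$ strictly increasing on $(0,\infty)$, and $\int_1^\infty dr/F(r)<\infty$. A $D$-regular graph is Ricci-flat at $x$ if, with $N(x)=\{x\}\cup\{y:y\sim x\}$, there exist maps $\eta_1,\dots,\eta_D:N(x)\to V$ such that (i) $\eta_i(y)\sim y$ for all $i$ and $y\in N(x)$; (ii) $\eta_i(y)\ne\eta_j(y)$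 for $y\in N(x)$, $i\ne j$; (iii) for each $i$, the lists $(\eta_i(\eta_j(x)))_{j=1}^D$ and $(\eta_j(\eta_i(x)))_{j=1}^D$ coincide as multisets. $G$ is Ricci-flat if it is Ricci-flat at every vertex. *)

(* Defs.v *)
From Stdlib Require Import Reals Lra List Permutation.
Import ListNotations.
Open Scope R_scope.

Definition lsum {V : Type} (f : V -> R) (l : list V) : R :=
  fold_right Rplus 0 (map f l).

Definition simple_graph {V : Type} (adj : V -> V -> Prop) : Prop :=
  (forall x y, adj x y -> adj y x) /\ (forall x, ~ adj x x).

Definition D_regular {V : Type} (adj : V -> V -> Prop) (nb : V -> list V)
  (D : nat) : Prop :=
  forall x, NoDup (nb x) /\ length (nb x) = D /\
            (forall y, In y (nb x) <-> adj x y).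

Definition in_N {V : Type} (adj : V -> V -> Prop) (x y : V) : Prop :=
  y = x \/ adj x y.

Definition ricci_flat_at {V : Type} (adj : V -> V -> Prop) (D : nat) (x : V)
  : Prop :=
  exists eta : nat -> V -> V,
    (forall i y, (i < D)%nat -> in_N adj x y -> adj y (eta i y)) /\
    (forall i j y, (i < D)%nat -> (j < D)%nat -> i <> j -> in_N adj x y ->
        eta i y <> eta j y) /\
    (forall i, (i < D)%nat ->
        Permutation (map (fun j => eta i (eta j x)) (seq 0 D))
                    (map (fun j => eta j (eta i x)) (seq 0 D))).

Definition ricci_flat {V : Type} (adj : V -> V -> Prop) (D : nat) : Prop :=
  forall x, ricci_flat_at adj D x.

Definition Lap {V : Type} (nb : V -> list V) (mu : V -> R) (u : V -> R) (x : V)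
  : R := / mu x * lsum (fun y => u y - u x) (nb x).

Definition Lop {V : Type} (nb : V -> list V) (mu : V -> R) (u : V -> R) (x : V)
  : R := - Lap nb mu u x.

Definition Psi {V : Type} (nb : V -> list V) (mu : V -> R) (H : R -> R)
  (v : V -> R) (x : V) : R :=
  / mu x * lsum (fun y => H (v y - v x)) (nb x).

Definition Upsilon (z : R) : R := exp z - 1 - z.
Definition Upsilon' (z : R) : R := exp z - 1.

(* CD-function: continuous F : [0,∞) -> [0,∞), F(0) = 0, F(x)/x strictly
   increasing on (0,∞), and ∫_1^∞ dr/F(r) < ∞ (improper Riemann integral:
   integrable on every [1,b] and the integrals converge as b -> ∞). *)
Definition is_CD_function (F : R -> R) : Prop :=
  (forall x, 0 <= x -> limit1_in F (fun y => 0 <= y) (F x) x) /\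
  (forall x, 0 <= x -> 0 <= F x) /\
  F 0 = 0 /\
  (forall x y, 0 < x -> x < y -> F x / x < F y / y) /\
  (forall b, 1 <= b -> inhabited (Riemann_integrable (fun r => / F r) 1 b)) /\
  (exists l : R, forall eps, 0 < eps -> exists B, forall b,
      B <= b -> forall pr : Riemann_integrable (fun r => / F r) 1 b,
      Rabs (RiemannInt pr - l) < eps).

Definition strictly_convex_nonneg (F : R -> R) : Prop :=
  forall x y t, 0 <= x -> 0 <= y -> x <> y -> 0 < t < 1 ->
    F (t * x + (1 - t) * y) < t * F x + (1 - t) * F y.

Definition F_RF (D : nat) (mu0 : R) (a : R) : R :=
  INR D / mu0 ^ 2 * exp (- (mu0 / INR D) * a) *
  (Upsilon (2 * mu0 / INR D * a) +
   (INR D - 1) * Upsilon (- (2 * mu0 / (INR D * (INR D - 1))) * a)).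

Definition satisfies_CD0 {V : Type} (adj : V -> V -> Prop) (nb : V -> list V)
  (mu : V -> R) (F : R -> R) : Prop :=
  forall (x : V) (v : V -> R),
    0 < Lop nb mu v x ->
    (forall y, adj x y -> Lop nb mu v y <= Lop nb mu v x) ->
    Lap nb mu (Psi nb mu Upsilon' v) x >= F (Lop nb mu v x).

(* Main.v *)
Require Import Defs.
From Stdlib Require Import Reals List.
From Stdlib Require Import Lra Lia Permutation Arith Wf_nat FunctionalExtensionality Classical.
From Coquelicot Require Import Coquelicot.
Open Scope R_scope.

Definition phi (n s : R) : R := exp (- s) + n * exp (s / n) - (n + 1).
Definition psi (n t : R) : R := exp (- t) + n * exp (t + 2 * t / n) - (n + 1) * exp t.
Definition psi1 (n t : R) : R := - exp (- t) + (n + 2) * exp (t + 2 * t / n) - (n + 1) * exp t.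
Definition psi2 (n t : R) : R :=
  exp (- t) + (n + 2) * (1 + 2 / n) * exp (t + 2 * t / n) - (n + 1) * exp t.

Lemma exp_tangent (q z : R) : 0 < q -> q * (1 + z - ln q) <= exp z.
Proof.
  intros Hq.
  replace (exp z) with (q * exp (z - ln q)).
  - apply Rmult_le_compat_l; [lra|]. pose proof (exp_ineq1_le (z - ln q)); lra.
  - unfold Rminus. rewrite exp_plus, exp_Ropp, exp_ln by lra. field. lra.
Qed.

Lemma phi_nonneg (n s : R) : 0 < n -> 0 <= phi n s.
Proof.
  intros Hn. unfold phi.
  pose proof (exp_ineq1_le (- s)). pose proof (exp_ineq1_le (s / n)).
  assert (n * (1 + s/n) = n + s) by (field; lra).
  assert (n * (1 + s / n) <= n * exp (s / n)) by (apply Rmult_le_compat_l; lra).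
  lra.
Qed.

Lemma psi_eq (n t : R) : 0 < n -> psi n t = exp t * phi n (2 * t).
Proof.
  intros Hn. unfold psi, phi.
  rewrite !Rmult_minus_distr_l, Rmult_plus_distr_l.
  rewrite <- exp_plus.
  replace (t + - (2 * t)) with (- t) by ring.
  replace (exp t * (n * exp (2 * t / n))) with (n * (exp t * exp (2 * t / n))) by ring.
  rewrite <- exp_plus. ring.
Qed.

Lemma psi_deriv (n t : R) : 0 < n -> derivable_pt_lim (psi n) t (psi1 n t).
Proof.
  intros Hn. apply is_derive_Reals. unfold psi, psi1.
  auto_derive; auto.
  unfold Rdiv. field. lra.
Qed.

Lemma psi1_deriv (n t : R) : 0 < n -> derivable_pt_lim (psi1 n) t (psi2 n t).
Proof.
  intros Hn. apply is_derive_Reals. unfold psi1, psi2.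
  auto_derive; auto. unfold Rdiv. field. lra.
Qed.

Lemma psi2_pos (n t : R) : 0 < n -> 0 < psi2 n t.
Proof.
  intros Hn. unfold psi2.
  set (A := (n + 2) * (1 + 2 / n)).
  assert (HA : A = n * ((n+2)/n) * ((n+2)/n)) by (unfold A; field; lra).
  assert (Hq : 1 < (n+2)/n). { replace ((n+2)/n) with (1 + 2/n) by (field; lra). assert (0 < 2/n) by (apply Rdiv_lt_0_compat; lra). lra. }
  assert (Hq' : 0 < (n+2)/n) by lra.
  assert (E1 : exp (- t) = exp t * exp (- (2 * t))) by (rewrite <- exp_plus; f_equal; ring).
  assert (E2 : exp (t + 2 * t / n) = exp t * exp (2 * t / n)) by (rewrite <- exp_plus; f_equal; ring).
  rewrite E1, E2.
  assert (Hin : 0 < exp (- (2 * t)) + A * exp (2 * t / n) - (n + 1)).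
  { pose proof (exp_ineq1_le (- (2 * t))).
    set (q := / (((n+2)/n) * ((n+2)/n))).
    assert (Hqp : 0 < q) by (unfold q; apply Rinv_0_lt_compat; nra).
    pose proof (exp_tangent q (2 * t / n) Hqp).
    assert (Hl : ln q < 0).
    { unfold q. rewrite ln_Rinv by nra. rewrite ln_mult by lra.
      assert (0 < ln ((n+2)/n)).
      { rewrite <- ln_1. apply ln_increasing; lra. } lra. }
    assert (HAq : A * q = n) by (rewrite HA; unfold q; field; split; lra).
    assert (A * (q * (1 + 2 * t / n - ln q)) <= A * exp (2 * t / n)).
    { apply Rmult_le_compat_l; [rewrite HA; nra | exact H0]. }
    assert (A * (q * (1 + 2 * t / n - ln q)) = n + 2 * t - n * ln q).
    { replace (A * (q * (1 + 2 * t / n - ln q))) with ((A * q) * (1 + 2 * t / n - ln q)) by ring.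
      rewrite HAq. field. lra. }
    nra. }
  pose proof (exp_pos t). nra.
Qed.

Lemma psi1_incr (n s t : R) : 0 < n -> s < t -> psi1 n s < psi1 n t.
Proof.
  intros Hn Hst.
  destruct (MVT_cor2 (psi1 n) (psi2 n) s t Hst) as [c [Hc _]].
  { intros c _. apply psi1_deriv; auto. }
  pose proof (psi2_pos n c Hn). nra.
Qed.

Lemma psi_tangent_strict (n m t : R) : 0 < n -> t <> m ->
  psi n m + psi1 n m * (t - m) < psi n t.
Proof.
  intros Hn Htm.
  destruct (Rlt_or_le m t) as [H|H].
  - destruct (MVT_cor2 (psi n) (psi1 n) m t H) as [c [Hc Hc2]].
    { intros c _. apply psi_deriv; auto. }
    pose proof (psi1_incr n m c Hn (proj1 Hc2)). nra.
  - assert (H' : t < m) by lra.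
    destruct (MVT_cor2 (psi n) (psi1 n) t m H') as [c [Hc Hc2]].
    { intros c _. apply psi_deriv; auto. }
    pose proof (psi1_incr n c m Hn (proj2 Hc2)). nra.
Qed.

Lemma psi_tangent (n m t : R) : 0 < n -> psi n m + psi1 n m * (t - m) <= psi n t.
Proof.
  intros Hn. destruct (Req_dec t m) as [->|H].
  - lra.
  - left. apply psi_tangent_strict; auto.
Qed.

Lemma psi_strict_convex (n x y l : R) : 0 < n -> x <> y -> 0 < l < 1 ->
  psi n (l * x + (1 - l) * y) < l * psi n x + (1 - l) * psi n y.
Proof.
  intros Hn Hxy Hl. set (z := l * x + (1 - l) * y).
  assert (x <> z). { unfold z. intro E. apply Hxy. nra. }
  assert (y <> z). { unfold z. intro E. apply Hxy. nra. }
  pose proof (psi_tangent_strict n z x Hn H).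
  pose proof (psi_tangent_strict n z y Hn H0).
  assert (E : l * (x - z) + (1 - l) * (y - z) = 0) by (unfold z; ring).
  set (p := psi1 n z) in *. set (a := psi n z) in *.
  assert (l * (a + p * (x - z)) < l * psi n x) by (apply Rmult_lt_compat_l; lra).
  assert ((1 - l) * (a + p * (y - z)) < (1 - l) * psi n y) by (apply Rmult_lt_compat_l; lra).
  assert (l * (a + p * (x - z)) + (1 - l) * (a + p * (y - z)) = a + p * (l * (x - z) + (1 - l) * (y - z))) by ring.
  rewrite E in H5. lra.
Qed.

Lemma psi_0 (n : R) : 0 < n -> psi n 0 = 0.
Proof. intros. unfold psi. replace (- 0) with 0 by ring.
  replace (0 + 2 * 0 / n) with 0 by (field; lra). rewrite exp_0. ring. Qed.

Lemma psi1_0 (n : R) : 0 < n -> psi1 n 0 = 0.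
Proof. intros. unfold psi1. replace (- 0) with 0 by ring.
  replace (0 + 2 * 0 / n) with 0 by (field; lra). rewrite exp_0. ring. Qed.

Lemma psi_pos (n t : R) : 0 < n -> t <> 0 -> 0 < psi n t.
Proof.
  intros Hn Ht. pose proof (psi_tangent_strict n 0 t Hn Ht).
  rewrite psi_0, psi1_0 in H by auto. lra.
Qed.

Lemma psi_nonneg (n t : R) : 0 < n -> 0 <= psi n t.
Proof.
  intros Hn. destruct (Req_dec t 0) as [->|H].
  - rewrite psi_0; lra.
  - left; apply psi_pos; auto.
Qed.


Lemma exp_mono (x y : R) : x <= y -> exp x <= exp y.
Proof. intros [H|H]; [left; apply exp_increasing; auto | subst; lra]. Qed.

Definition G (n x y : R) : R := exp (- y) + n * exp (x + (x + y) / n) - (n + 1) * exp x.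

Lemma G_eq (n x y : R) : 0 < n -> G n x y = exp x * phi n (x + y).
Proof.
  intros Hn. unfold G, phi.
  rewrite !Rmult_minus_distr_l, Rmult_plus_distr_l.
  rewrite <- exp_plus. replace (x + - (x + y)) with (- y) by ring.
  replace (exp x * (n * exp ((x + y) / n))) with (n * (exp x * exp ((x + y) / n))) by ring.
  rewrite <- exp_plus. ring.
Qed.

Lemma G_diag (n t : R) : 0 < n -> G n t t = psi n t.
Proof. intros Hn. unfold G, psi. replace ((t + t) / n) with (2 * t / n) by (field; lra). ring. Qed.

Lemma G_pair (n x y : R) : 0 < n -> 2 * psi n ((x + y) / 2) <= G n x y + G n y x.
Proof.
  intros Hn. rewrite !G_eq, psi_eq by auto.
  replace (2 * ((x + y) / 2)) with (x + y) by field. replace (y + x) with (x + y) by ring.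
  pose proof (phi_nonneg n (x + y) Hn).
  assert (E1 : exp x = exp (x/2) * exp (x/2)) by (rewrite <- exp_plus; f_equal; field).
  assert (E2 : exp y = exp (y/2) * exp (y/2)) by (rewrite <- exp_plus; f_equal; field).
  assert (E3 : exp ((x+y)/2) = exp (x/2) * exp (y/2)) by (rewrite <- exp_plus; f_equal; field).
  assert (H2 : 2 * exp ((x+y)/2) <= exp x + exp y) by (rewrite E1, E2, E3; pose proof (pow2_ge_0 (exp (x/2) - exp (y/2))); nra).
  pose proof (Rmult_le_compat_r _ _ _ H H2). lra.
Qed.

Lemma G_swap (n x1 y1 x2 y2 : R) : 0 < n -> x2 <= x1 -> y2 <= y1 ->
  G n x1 y2 + G n x2 y1 <= G n x1 y1 + G n x2 y2.
Proof.
  intros Hn Hx Hy. unfold G.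
  assert (F : forall x y, exp (x + (x + y) / n) = exp (x + x / n) * exp (y / n)).
  { intros x y. rewrite <- exp_plus. f_equal. field. lra. }
  rewrite !F.
  assert (exp (x2 + x2/n) <= exp (x1 + x1/n)).
  { apply exp_mono. assert (x2 / n <= x1 / n) by (apply Rmult_le_compat_r; [left; apply Rinv_0_lt_compat; lra| lra]). lra. }
  assert (exp (y2/n) <= exp (y1/n)).
  { apply exp_mono. apply Rmult_le_compat_r; [left; apply Rinv_0_lt_compat; lra| lra]. }
  set (X1 := exp (x1 + x1 / n)) in *. set (X2 := exp (x2 + x2 / n)) in *.
  set (Y1 := exp (y1 / n)) in *. set (Y2 := exp (y2 / n)) in *.
  assert (0 <= n * ((X1 - X2) * (Y1 - Y2))).
  { apply Rmult_le_pos; [lra|]. apply Rmult_le_pos; lra. }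
  nra.
Qed.

Lemma lsum_nil {A} (f : A -> R) : lsum f nil = 0.
Proof. reflexivity. Qed.
Lemma lsum_cons {A} (f : A -> R) a l : lsum f (a :: l) = f a + lsum f l.
Proof. reflexivity. Qed.
Lemma lsum_app {A} (f : A -> R) l1 l2 : lsum f (l1 ++ l2) = lsum f l1 + lsum f l2.
Proof. induction l1; simpl; [rewrite lsum_nil; ring|]. rewrite !lsum_cons, IHl1. ring. Qed.
Lemma lsum_perm {A} (f : A -> R) l l' : Permutation l l' -> lsum f l = lsum f l'.
Proof.
  induction 1.
  - reflexivity.
  - rewrite !lsum_cons, IHPermutation; reflexivity.
  - rewrite !lsum_cons; ring.
  - rewrite IHPermutation1; auto.
Qed.
Lemma lsum_map {A B} (f : B -> R) (g : A -> B) l : lsum f (map g l) = lsum (fun x => f (g x)) l.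
Proof. unfold lsum. rewrite map_map. reflexivity. Qed.
Lemma lsum_le {A} (f g : A -> R) l : (forall x, In x l -> f x <= g x) -> lsum f l <= lsum g l.
Proof.
  induction l; intros H; unfold lsum in *; simpl; [lra|].
  apply Rplus_le_compat; [apply H; left; auto| apply IHl; intros; apply H; right; auto].
Qed.
Lemma lsum_ext {A} (f g : A -> R) l : (forall x, In x l -> f x = g x) -> lsum f l = lsum g l.
Proof.
  induction l; intros H; unfold lsum in *; simpl; [lra|].
  rewrite H by (left; auto). rewrite IHl; auto. intros; apply H; right; auto.
Qed.
Lemma lsum_plus {A} (f g : A -> R) l : lsum (fun x => f x + g x) l = lsum f l + lsum g l.
Proof. induction l; [unfold lsum; simpl; ring|]. rewrite !lsum_cons, IHl; ring. Qed.
Lemma lsum_scal {A} (c : R) (f : A -> R) l : lsum (fun x => c * f x) l = c * lsum f l.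
Proof. induction l; [unfold lsum; simpl; ring|]. rewrite !lsum_cons, IHl; ring. Qed.
Lemma lsum_const {A} (c : R) (l : list A) : lsum (fun _ => c) l = INR (length l) * c.
Proof. induction l; [unfold lsum; simpl; ring|]. rewrite lsum_cons, IHl. cbn [length]. rewrite S_INR. ring. Qed.
Lemma lsum_minus {A} (f g : A -> R) l : lsum (fun x => f x - g x) l = lsum f l - lsum g l.
Proof. induction l; [unfold lsum; simpl; ring|]. rewrite !lsum_cons, IHl; ring. Qed.

Lemma in_perm {A} (a : A) l : In a l -> exists l', Permutation l (a :: l').
Proof.
  intros H. destruct (in_split a l H) as [l1 [l2 ->]]. exists (l1 ++ l2).
  symmetry. apply Permutation_middle.
Qed.

Lemma list_max {l : list R} : l <> nil -> exists M, In M l /\ forall x, In x l -> x <= M.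
Proof.
  induction l as [|a l IH]; intros Hne; [congruence|].
  destruct l as [|b l'].
  - exists a. split; [left; auto|]. intros x [->|[]]; lra.
  - destruct IH as [M [HM HM2]]; [congruence|].
    destruct (Rle_dec a M).
    + exists M. split; [right; auto|]. intros x [->|Hx]; auto.
    + exists a. split; [left; auto|]. intros x [->|Hx]; [lra|]. specialize (HM2 x Hx). lra.
Qed.

Lemma list_min {l : list R} : l <> nil -> exists M, In M l /\ forall x, In x l -> M <= x.
Proof.
  induction l as [|a l IH]; intros Hne; [congruence|].
  destruct l as [|b l'].
  - exists a. split; [left; auto|]. intros x [->|[]]; lra.
  - destruct IH as [M [HM HM2]]; [congruence|].
    destruct (Rle_dec M a).
    + exists M. split; [right; auto|]. intros x [->|Hx]; auto.
    + exists a. split; [left; auto|]. intros x [->|Hx]; [lra|]. specialize (HM2 x Hx). lra.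
Qed.

Definition Gp (n : R) (p : R * R) : R := G n (fst p) (snd p).

Lemma bring (n : R) (l : list (R * R)) (x0 y0 : R) :
  In x0 (map fst l) -> In y0 (map snd l) ->
  (forall u w, In (x0, u) l -> In (w, y0) l -> G n x0 y0 + G n w u <= G n x0 u + G n w y0) ->
  exists l', Permutation (map fst ((x0, y0) :: l')) (map fst l) /\
             Permutation (map snd ((x0, y0) :: l')) (map snd l) /\
             lsum (Gp n) ((x0, y0) :: l') <= lsum (Gp n) l /\
             S (length l') = length l.
Proof.
  intros H1 H2 Hsw.
  apply in_map_iff in H1. destruct H1 as [[x u] [Hx Hin1]]. simpl in Hx. subst x.
  apply in_map_iff in H2. destruct H2 as [[w y] [Hy Hin2]]. simpl in Hy. subst y.
  destruct (in_perm _ _ Hin1) as [l1 Hl1].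
  pose proof (Permutation_in _ Hl1 Hin2) as Hin2'.
  destruct Hin2' as [E|Hin3].
  - injection E; intros; subst. exists l1.
    repeat split.
    + symmetry. apply Permutation_map; auto.
    + symmetry. apply Permutation_map; auto.
    + rewrite (lsum_perm _ _ _ Hl1). lra.
    + rewrite (Permutation_length Hl1). reflexivity.
  - destruct (in_perm _ _ Hin3) as [l2 Hl2].
    assert (Hl : Permutation l ((x0, u) :: (w, y0) :: l2)) by (rewrite Hl1; apply perm_skip; auto).
    exists ((w, u) :: l2). repeat split.
    + rewrite Hl. simpl. apply Permutation_refl.
    + rewrite Hl. simpl. apply perm_swap.
    + rewrite (lsum_perm _ _ _ Hl). unfold lsum, Gp. simpl.
      specialize (Hsw u w Hin1 Hin2). lra.
    + rewrite (Permutation_length Hl). reflexivity.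
Qed.

Definition Tl (n m0 x : R) : R := psi n m0 + psi1 n m0 * (x - m0).

Lemma lsum_fst (f : R -> R) (l : list (R * R)) : lsum (fun p => f (fst p)) l = lsum f (map fst l).
Proof. rewrite lsum_map. reflexivity. Qed.

Lemma pairing (n m0 : R) : 0 < n -> forall l : list (R * R),
  Permutation (map fst l) (map snd l) ->
  lsum (fun p => Tl n m0 (fst p)) l <= lsum (Gp n) l.
Proof.
  intros Hn l. remember (length l) as k. revert l Heqk.
  induction k as [k IH] using (well_founded_induction lt_wf).
  intros l Hk HP.
  destruct l as [|p0 l0]; [unfold lsum; simpl; lra|].
  set (l := p0 :: l0) in *.
  assert (Hne : map fst l <> nil) by (simpl; congruence).
  destruct (list_max Hne) as [M [HM HMb]].
  destruct (list_min Hne) as [s [Hs Hsb]].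
  assert (HSb : forall y, In y (map snd l) -> s <= y <= M).
  { intros y Hy. apply (Permutation_in _ (Permutation_sym HP)) in Hy. split; auto. }
  assert (Hs' : In s (map snd l)) by (apply (Permutation_in _ HP); auto).
  destruct (bring n l M s HM Hs') as [l1 [HF1 [HS1 [Hsum1 Hlen1]]]].
  { intros u w Hu Hw.
    assert (s <= u) by (apply (HSb u); apply (in_map snd) in Hu; exact Hu).
    assert (w <= M) by (apply HMb; apply (in_map fst) in Hw; exact Hw).
    apply G_swap; auto. }
  simpl in HF1, HS1.
  assert (HP1 : Permutation (M :: map fst l1) (s :: map snd l1)).
  { eapply perm_trans; [exact HF1|]. eapply perm_trans; [exact HP|]. symmetry; exact HS1. }
  assert (Hsumfst : lsum (fun p => Tl n m0 (fst p)) l = Tl n m0 M + lsum (fun p => Tl n m0 (fst p)) l1).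
  { rewrite !lsum_fst. rewrite <- (lsum_perm _ _ _ HF1). reflexivity. }
  rewrite Hsumfst.
  assert (Hsum1' : Gp n (M, s) + lsum (Gp n) l1 <= lsum (Gp n) l) by exact Hsum1.
  destruct (Req_dec M s) as [EMs|NMs].
  - subst s. apply Permutation_cons_inv in HP1.
    assert (IH1 := IH (length l1) ltac:(lia) l1 eq_refl HP1).
    change (Gp n (M, M)) with (G n M M) in Hsum1'. rewrite G_diag in Hsum1' by auto.
    pose proof (psi_tangent n m0 M Hn). unfold Tl. unfold Tl in IH1. lra.
  - assert (Hs1 : In s (map fst l1)).
    { assert (In s (M :: map fst l1)) by (apply (Permutation_in _ (Permutation_sym HP1)); left; auto).
      destruct H as [H|H]; [congruence|auto]. }
    assert (HM1 : In M (map snd l1)).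
    { assert (In M (s :: map snd l1)) by (apply (Permutation_in _ HP1); left; auto).
      destruct H as [H|H]; [congruence|auto]. }
    destruct (bring n l1 s M Hs1 HM1) as [l2 [HF2 [HS2 [Hsum2 Hlen2]]]].
    { intros u w Hu Hw.
      assert (u <= M).
      { apply (HSb u). apply (Permutation_in _ HS1). right. apply (in_map snd) in Hu; exact Hu. }
      assert (s <= w).
      { apply Hsb. apply (Permutation_in _ HF1). right. apply (in_map fst) in Hw; exact Hw. }
      pose proof (G_swap n w M s u Hn H0 H). lra. }
    simpl in HF2, HS2.
    assert (HP2 : Permutation (map fst l2) (map snd l2)).
    { apply (Permutation_cons_inv (a := s)). apply (Permutation_cons_inv (a := M)).
      eapply perm_trans; [apply perm_skip; exact HF2|]. eapply perm_trans; [exact HP1|].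
      eapply perm_trans; [apply perm_skip; symmetry; exact HS2|]. apply perm_swap. }
    assert (IH2 := IH (length l2) ltac:(lia) l2 eq_refl HP2).
    assert (Hsumfst2 : lsum (fun p => Tl n m0 (fst p)) l1 = Tl n m0 s + lsum (fun p => Tl n m0 (fst p)) l2).
    { rewrite !lsum_fst. rewrite <- (lsum_perm _ _ _ HF2). reflexivity. }
    rewrite Hsumfst2.
    assert (Hsum2' : Gp n (s, M) + lsum (Gp n) l2 <= lsum (Gp n) l1) by exact Hsum2.
    change (Gp n (M, s)) with (G n M s) in Hsum1'. change (Gp n (s, M)) with (G n s M) in Hsum2'.
    pose proof (G_pair n M s Hn).
    pose proof (psi_tangent n m0 ((M + s) / 2) Hn).
    assert (Tl n m0 M + Tl n m0 s = 2 * (psi n m0 + psi1 n m0 * ((M + s) / 2 - m0))) by (unfold Tl; field).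
    lra.
Qed.


Lemma fin_choice (P : nat -> nat -> Prop) (D : nat) :
  (forall j, (j < D)%nat -> exists i, P j i) -> exists r : nat -> nat, forall j, (j < D)%nat -> P j (r j).
Proof.
  induction D as [|D IH]; intros H.
  - exists (fun _ => 0%nat). intros j Hj. lia.
  - destruct IH as [r Hr]. { intros j Hj. apply H. lia. }
    destruct (H D ltac:(lia)) as [i0 Hi0].
    exists (fun j => if Nat.eqb j D then i0 else r j).
    intros j Hj. destruct (Nat.eqb_spec j D) as [->|Hne]; auto. apply Hr. lia.
Qed.

Lemma exp_sum_bound (l : list R) (z0 : R) (N : nat) :
  (1 <= N)%nat -> In z0 l -> length l = S N -> 0 <= lsum (fun z => z) l ->
  exp z0 + INR N * exp (- z0 / INR N) <= lsum exp l.
Proof.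
  intros HN Hin Hlen Hsum.
  destruct (in_perm _ _ Hin) as [l' Hl'].
  rewrite (lsum_perm _ _ _ Hl') in Hsum. rewrite (lsum_perm _ _ _ Hl'). rewrite lsum_cons in Hsum |- *.
  assert (Hlen' : length l' = N) by (apply Permutation_length in Hl'; simpl in Hl'; lia).
  assert (HNp : 0 < INR N) by (apply lt_0_INR; lia).
  set (p := exp (- z0 / INR N)).
  assert (Hp : 0 < p) by apply exp_pos.
  assert (Hlp : ln p = - z0 / INR N) by (unfold p; apply ln_exp).
  assert (lsum (fun z => p * (1 + z - ln p)) l' <= lsum exp l').
  { apply lsum_le. intros z _. apply exp_tangent; auto. }
  assert (E : lsum (fun z => p * (1 + z - ln p)) l' = p * (INR N + lsum (fun z => z) l' + z0)).
  { rewrite lsum_scal. f_equal. rewrite lsum_minus, lsum_plus, lsum_const, Hlen'.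
    rewrite lsum_const, Hlen', Hlp. field. lra. }
  assert (p * (INR N) <= p * (INR N + lsum (fun z => z) l' + z0)) by (apply Rmult_le_compat_l; lra).
  lra.
Qed.

Lemma lsum_swap {A B} (f : A -> B -> R) l1 l2 :
  lsum (fun i => lsum (fun j => f i j) l2) l1 = lsum (fun j => lsum (fun i => f i j) l1) l2.
Proof.
  induction l1 as [|a l1 IH].
  - unfold lsum at 1. simpl. symmetry. rewrite (lsum_ext _ (fun _ => 0)) by (intros; reflexivity).
    rewrite lsum_const. ring.
  - rewrite lsum_cons, IH.
    rewrite (lsum_ext (fun j => lsum (fun i => f i j) (a :: l1)) (fun j => f a j + lsum (fun i => f i j) l1))
      by (intros; rewrite lsum_cons; reflexivity).
    rewrite lsum_plus. reflexivity.
Qed.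

Lemma nb_perm {V : Type} (adj : V -> V -> Prop) (nb : V -> list V) (D : nat)
  (eta : nat -> V -> V) (y : V) :
  D_regular adj nb D ->
  (forall i, (i < D)%nat -> adj y (eta i y)) ->
  (forall i j, (i < D)%nat -> (j < D)%nat -> i <> j -> eta i y <> eta j y) ->
  Permutation (map (fun i => eta i y) (seq 0 D)) (nb y).
Proof.
  intros Hreg H1 H2. destruct (Hreg y) as [Hnd [Hlen Hin]].
  apply NoDup_Permutation_bis.
  - apply NoDup_map_NoDup_ForallPairs; [|apply seq_NoDup].
    intros i j Hi Hj E. apply in_seq in Hi. apply in_seq in Hj.
    destruct (Nat.eq_dec i j) as [e|ne]; auto. exfalso. apply (H2 i j); auto; lia.
  - rewrite length_map, length_seq, Hlen. lia.
  - intros z Hz. apply in_map_iff in Hz. destruct Hz as [i [<- Hi]].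
    apply in_seq in Hi. apply Hin. apply H1. lia.
Qed.

Lemma main_ineq {V : Type} (adj : V -> V -> Prop) (nb : V -> list V)
  (D : nat) (mu : V -> R) (mu0 : R) :
  simple_graph adj -> D_regular adj nb D -> ricci_flat adj D -> (2 <= D)%nat ->
  0 < mu0 -> (forall y, mu y = mu0) ->
  forall (x : V) (v : V -> R),
    (forall y, adj x y -> Lop nb mu v y <= Lop nb mu v x) ->
    INR D / mu0 ^ 2 * psi (INR D - 1) (- (mu0 / INR D) * Lop nb mu v x)
      <= Lap nb mu (Psi nb mu Upsilon' v) x.
Proof.
  intros Hsg Hreg Hrf HD Hmu0 Hmu x v Hmax.
  destruct (Hrf x) as [eta [He1 [He2 He3]]].
  set (n := INR D - 1).
  assert (HD2 : 2 <= INR D) by (replace 2 with (INR 2) by reflexivity; apply le_INR; lia).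
  assert (Hn : 1 <= n) by (unfold n; lra).
  assert (Hn0 : 0 < n) by lra.
  assert (HDr : INR D = n + 1) by (unfold n; ring).
  assert (Hadj : forall i, (i < D)%nat -> adj x (eta i x)).
  { intros i Hi. apply He1; auto. left; reflexivity. }
  assert (Hpx : Permutation (map (fun i => eta i x) (seq 0 D)) (nb x)).
  { apply (nb_perm adj); [exact Hreg | intros i Hi | intros i j Hi Hj Hij].
    - apply He1; auto. left; auto.
    - apply He2; auto. left; auto. }
  assert (Hpy : forall i, (i < D)%nat ->
     Permutation (map (fun j => eta j (eta i x)) (seq 0 D)) (nb (eta i x))).
  { intros i Hi. apply (nb_perm adj); [exact Hreg | intros j Hj | intros j k Hj Hk Hjk].
    - apply He1; auto. right; apply Hadj; auto.
    - apply He2; auto. right; apply Hadj; auto. }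
  assert (Tx : forall f : V -> R, lsum f (nb x) = lsum (fun i => f (eta i x)) (seq 0 D)).
  { intros f. rewrite <- (lsum_perm _ _ _ Hpx), lsum_map. reflexivity. }
  assert (Ty : forall i, (i < D)%nat -> forall f : V -> R,
     lsum f (nb (eta i x)) = lsum (fun j => f (eta j (eta i x))) (seq 0 D)).
  { intros i Hi f. rewrite <- (lsum_perm _ _ _ (Hpy i Hi)), lsum_map. reflexivity. }
  set (idx := seq 0 D) in *.
  assert (Hidx : forall i, In i idx -> (i < D)%nat) by (intros i Hi; apply in_seq in Hi; lia).
  assert (Hlen : length idx = D) by apply length_seq.
  set (a := fun i => v (eta i x) - v x).
  set (b := fun i j => v (eta j (eta i x)) - v (eta i x)).
  assert (HLx : Lop nb mu v x = - (/ mu0 * lsum a idx)).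
  { unfold Lop, Lap. rewrite Hmu, Tx. reflexivity. }
  assert (HLy : forall i, (i < D)%nat -> Lop nb mu v (eta i x) = - (/ mu0 * lsum (b i) idx)).
  { intros i Hi. unfold Lop, Lap. rewrite Hmu, (Ty i Hi). reflexivity. }
  assert (Hrow : forall i, (i < D)%nat -> lsum a idx <= lsum (b i) idx).
  { intros i Hi. pose proof (Hmax _ (Hadj i Hi)) as H. rewrite HLx, (HLy i Hi) in H.
    assert (0 < / mu0) by (apply Rinv_0_lt_compat; auto).
    apply (Rmult_le_reg_l (/ mu0)); auto. lra. }
  set (P := lsum (fun j => exp (a j)) idx).
  set (Qi := fun i => lsum (fun j => exp (b i j)) idx).
  assert (HLHS : Lap nb mu (Psi nb mu Upsilon' v) x = / mu0 * / mu0 * (lsum Qi idx - INR D * P)).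
  { unfold Lap. rewrite Hmu, Tx.
    rewrite (lsum_ext _ (fun i => / mu0 * (Qi i - P))).
    - rewrite lsum_scal, lsum_minus, lsum_const, Hlen. ring.
    - intros i Hi. unfold Psi. rewrite !Hmu, (Ty i (Hidx i Hi)), Tx.
      unfold Upsilon'. rewrite !lsum_minus, !lsum_const, Hlen.
      unfold Qi, P, a, b. ring. }
  assert (HR : forall i, (i < D)%nat -> Qi i = lsum (fun j => exp (a j + b j i - a i)) idx).
  { intros i Hi. pose proof (He3 i Hi) as H3.
    apply (lsum_perm (fun z => exp (v z - v x))) in H3. rewrite !lsum_map in H3.
    unfold Qi.
    rewrite (lsum_ext (fun j => exp (b i j)) (fun j => exp (- a i) * exp (v (eta j (eta i x)) - v x)))
      by (intros j _; rewrite <- exp_plus; f_equal; unfold a, b; ring).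
    rewrite (lsum_ext (fun j => exp (a j + b j i - a i)) (fun j => exp (- a i) * exp (v (eta i (eta j x)) - v x)))
      by (intros j _; rewrite <- exp_plus; f_equal; unfold a, b; ring).
    rewrite !lsum_scal. f_equal. symmetry. exact H3. }
  set (Rj := fun j => lsum (fun i => exp (b j i - a i)) idx).
  assert (HQ : lsum Qi idx = lsum (fun j => exp (a j) * Rj j) idx).
  { rewrite (lsum_ext Qi (fun i => lsum (fun j => exp (a j + b j i - a i)) idx))
      by (intros i Hi; apply HR; auto).
    rewrite lsum_swap. apply lsum_ext. intros j _. unfold Rj. rewrite <- lsum_scal.
    apply lsum_ext. intros i _. rewrite <- exp_plus. f_equal. ring. }
  destruct (fin_choice (fun j i => (i < D)%nat /\ eta i (eta j x) = x) D) as [r Hr].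
  { intros j Hj.
    assert (Hin : In x (nb (eta j x))).
    { destruct (Hreg (eta j x)) as [_ [_ Hi]]. apply Hi. apply (proj1 Hsg). apply Hadj; auto. }
    apply (Permutation_in _ (Permutation_sym (Hpy j Hj))) in Hin.
    apply in_map_iff in Hin. destruct Hin as [i [Ei Hi]]. exists i. split; [|exact Ei].
    apply Hidx; exact Hi. }
  assert (Hrperm : Permutation idx (map r idx)).
  { apply NoDup_Permutation_bis.
    - apply seq_NoDup.
    - rewrite length_map. lia.
    - intros i Hi. pose proof (Hidx i Hi) as HiD.
      assert (Hin : In x (nb (eta i x))).
      { destruct (Hreg (eta i x)) as [_ [_ Hi']]. apply Hi'. apply (proj1 Hsg). apply Hadj; auto. }
      apply (Permutation_in _ (Permutation_sym (Hpy i HiD))) in Hin.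
      apply (Permutation_in _ (Permutation_sym (He3 i HiD))) in Hin.
      apply in_map_iff in Hin. destruct Hin as [k [Ek Hk]].
      pose proof (Hidx k Hk) as HkD.
      apply in_map_iff. exists k. split; auto.
      destruct (Hr k HkD) as [HrkD Erk].
      destruct (Nat.eq_dec (r k) i) as [e|ne]; auto.
      exfalso. apply (He2 (r k) i (eta k x)); auto.
      + right; apply Hadj; auto.
      + congruence. }
  assert (Hrowb : forall j, (j < D)%nat ->
     exp (- (a j + a (r j))) + n * exp ((a j + a (r j)) / n) <= Rj j).
  { intros j Hj. destruct (Hr j Hj) as [HrjD Erj].
    assert (HN : INR (D - 1) = n) by (rewrite minus_INR by lia; reflexivity).
    pose proof (exp_sum_bound (map (fun i => b j i - a i) idx) (- (a j + a (r j))) (D - 1)) as H.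
    rewrite HN in H. unfold Rj. rewrite (lsum_map exp) in H.
    replace (- - (a j + a (r j)) / n) with ((a j + a (r j)) / n) in H by (field; lra).
    apply H.
    - lia.
    - apply in_map_iff. exists (r j). split.
      + unfold b, a. rewrite Erj. ring.
      + apply in_seq. lia.
    - rewrite length_map, Hlen. lia.
    - rewrite lsum_map, lsum_minus. pose proof (Hrow j Hj). lra. }
  set (m0 := lsum a idx / INR D).
  assert (Hpair : INR D * psi n m0 <= lsum (fun j => G n (a j) (a (r j))) idx).
  { set (pl := map (fun j => (a j, a (r j))) idx).
    assert (Hpl : Permutation (map fst pl) (map snd pl)).
    { unfold pl. rewrite !map_map. simpl.
      replace (map (fun j => a (r j)) idx) with (map a (map r idx)) by (rewrite map_map; reflexivity).
      apply Permutation_map. exact Hrperm. }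
    pose proof (pairing n m0 Hn0 pl Hpl) as H.
    unfold pl in H. rewrite !lsum_map in H. simpl in H.
    unfold Gp in H. simpl in H.
    assert (E : lsum (fun j => Tl n m0 (a j)) idx = INR D * psi n m0).
    { unfold Tl. rewrite lsum_plus, lsum_const, Hlen, lsum_scal, lsum_minus, lsum_const, Hlen.
      unfold m0. field. lra. }
    lra. }
  assert (Hcomb : lsum (fun j => G n (a j) (a (r j))) idx <= lsum Qi idx - INR D * P).
  { rewrite HQ. unfold P. rewrite <- lsum_scal, <- lsum_minus. apply lsum_le.
    intros j Hj. pose proof (Hrowb j (Hidx j Hj)) as H.
    rewrite G_eq by auto. unfold phi.
    pose proof (exp_pos (a j)).
    assert (exp (a j) * (exp (- (a j + a (r j))) + n * exp ((a j + a (r j)) / n)) <= exp (a j) * Rj j)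
      by (apply Rmult_le_compat_l; lra).
    rewrite HDr. lra. }
  rewrite HLHS, HLx.
  replace (- (mu0 / INR D) * - (/ mu0 * lsum a idx)) with m0 by (unfold m0; field; lra).
  assert (0 < / mu0 * / mu0) by (apply Rmult_lt_0_compat; apply Rinv_0_lt_compat; auto).
  replace (INR D / mu0 ^ 2 * psi n m0) with (/ mu0 * / mu0 * (INR D * psi n m0)) by (field; lra).
  apply Rmult_le_compat_l; lra.
Qed.


Lemma F_RF_eq (D : nat) (mu0 a : R) : (2 <= D)%nat -> 0 < mu0 ->
  F_RF D mu0 a = INR D / mu0 ^ 2 * psi (INR D - 1) (- (mu0 / INR D) * a).
Proof.
  intros HD Hmu.
  assert (HD2 : 2 <= INR D) by (replace 2 with (INR 2) by reflexivity; apply le_INR; lia).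
  unfold F_RF, psi, Upsilon.
  set (t := - (mu0 / INR D) * a).
  replace (2 * mu0 / INR D * a) with (- (2 * t)) by (unfold t; field; lra).
  replace (- (2 * mu0 / (INR D * (INR D - 1))) * a) with (2 * t / (INR D - 1)) by (unfold t; field; lra).
  assert (E1 : exp t * exp (- (2 * t)) = exp (- t)) by (rewrite <- exp_plus; f_equal; ring).
  assert (E2 : exp t * exp (2 * t / (INR D - 1)) = exp (t + 2 * t / (INR D - 1))) by (rewrite <- exp_plus; reflexivity).
  rewrite <- E1, <- E2. field. lra.
Qed.


Definition Ff (K c n : R) (a : R) : R := K * psi n (- c * a).

Lemma Ff_cont (K c n x : R) : continuity_pt (Ff K c n) x.
Proof.
  apply continuity_pt_filterlim. apply (ex_derive_continuous (K := R_AbsRing) (V := R_NormedModule)).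
  unfold Ff, psi. auto_derive. auto.
Qed.

Lemma Ff_pos (K c n x : R) : 0 < K -> 0 < c -> 0 < n -> 0 < x -> 0 < Ff K c n x.
Proof.
  intros HK Hc Hn Hx. unfold Ff. apply Rmult_lt_0_compat; auto. apply psi_pos; auto.
  intro E. assert (0 < c * x) by (apply Rmult_lt_0_compat; auto). lra.
Qed.

Lemma Ff_strict_convex (K c n : R) : 0 < K -> 0 < c -> 0 < n -> strictly_convex_nonneg (Ff K c n).
Proof.
  intros HK Hc Hn x y t Hx Hy Hxy Ht. unfold Ff.
  replace (- c * (t * x + (1 - t) * y)) with (t * (- c * x) + (1 - t) * (- c * y)) by ring.
  assert (- c * x <> - c * y). { intro E. apply Hxy. apply (Rmult_eq_reg_l (- c)); auto; lra. }
  pose proof (psi_strict_convex n (- c * x) (- c * y) t Hn H Ht).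
  replace (t * (K * psi n (- c * x)) + (1 - t) * (K * psi n (- c * y)))
    with (K * (t * psi n (- c * x) + (1 - t) * psi n (- c * y))) by ring.
  apply Rmult_lt_compat_l; auto.
Qed.

Lemma Ff_0 (K c n : R) : 0 < n -> Ff K c n 0 = 0.
Proof. intros Hn. unfold Ff. replace (- c * 0) with 0 by ring. rewrite psi_0; auto; ring. Qed.

Lemma Ff_ratio (K c n x y : R) : 0 < K -> 0 < c -> 0 < n -> 0 < x -> x < y ->
  Ff K c n x / x < Ff K c n y / y.
Proof.
  intros HK Hc Hn Hx Hxy.
  pose proof (Ff_strict_convex K c n HK Hc Hn y 0 (x / y)) as H.
  assert (Hy : 0 < y) by lra.
  assert (0 < x / y < 1).
  { split. apply Rdiv_lt_0_compat; auto. apply (Rmult_lt_reg_r y); auto.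
    unfold Rdiv. rewrite Rmult_assoc, Rinv_l by lra. lra. }
  specialize (H ltac:(lra) ltac:(lra) ltac:(lra) H0).
  replace (x / y * y + (1 - x / y) * 0) with x in H by (field; lra).
  rewrite Ff_0 in H by auto.
  apply (Rmult_lt_reg_r (x * y)); [nra|].
  replace (Ff K c n x / x * (x * y)) with (Ff K c n x * y) by (field; lra).
  replace (Ff K c n y / y * (x * y)) with (x / y * Ff K c n y * y) by (field; lra).
  apply Rmult_lt_compat_r; auto. lra.
Qed.

Lemma Ff_int (K c n a b : R) : 0 < K -> 0 < c -> 0 < n -> 1 <= a -> a <= b ->
  Riemann_integrable (fun r => / Ff K c n r) a b.
Proof.
  intros HK Hc Hn Ha Hab. apply continuity_implies_RiemannInt; auto.
  intros x Hx. apply (continuity_pt_inv (Ff K c n)). apply Ff_cont.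
  pose proof (Ff_pos K c n x HK Hc Hn ltac:(lra)). lra.
Qed.

Lemma Ff_int_nonneg (K c n a b : R) (pr : Riemann_integrable (fun r => / Ff K c n r) a b) :
  0 < K -> 0 < c -> 0 < n -> 1 <= a -> a <= b -> 0 <= RiemannInt pr.
Proof.
  intros HK Hc Hn Ha Hab.
  pose proof (RiemannInt_P19 (RiemannInt_P14 a b 0) pr Hab) as H.
  rewrite RiemannInt_P15 in H. apply Rle_trans with (2 := H ltac:(intros x Hx; unfold fct_cte;
    left; apply Rinv_0_lt_compat; apply Ff_pos; auto; lra)). lra.
Qed.

Lemma Ff_lower (K c n r : R) : 0 < K -> 0 < c -> 0 < n ->
  ln (2 * (n + 1)) / (2 * c) <= r -> K * exp (c * r) / 2 <= Ff K c n r.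
Proof.
  intros HK Hc Hn Hr. unfold Ff, psi.
  replace (- (- c * r)) with (c * r) by ring.
  assert (H2 : 2 * (n + 1) <= exp (c * r) * exp (c * r)).
  { rewrite <- exp_plus. rewrite <- (exp_ln (2 * (n + 1))) at 1 by lra.
    apply exp_mono. apply (Rmult_le_compat_l (2 * c)) in Hr; [|lra].
    replace (2 * c * (ln (2 * (n + 1)) / (2 * c))) with (ln (2 * (n + 1))) in Hr by (field; lra). lra. }
  assert (E : exp (- c * r) * exp (c * r) = 1) by (rewrite <- exp_plus; replace (- c * r + c * r) with 0 by ring; apply exp_0).
  pose proof (exp_pos (c * r)). pose proof (exp_pos (- c * r)).
  pose proof (exp_pos (- c * r + 2 * (- c * r) / n)).
  assert ((n + 1) * exp (- c * r) <= exp (c * r) / 2).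
  { apply (Rmult_le_reg_r (exp (c * r))); auto.
    replace ((n + 1) * exp (- c * r) * exp (c * r)) with (n + 1) by (rewrite Rmult_assoc, E; ring).
    replace (exp (c * r) / 2 * exp (c * r)) with (exp (c * r) * exp (c * r) / 2) by field. lra. }
  assert (0 <= n * exp (- c * r + 2 * (- c * r) / n)) by (apply Rmult_le_pos; lra).
  replace (K * exp (c * r) / 2) with (K * (exp (c * r) / 2)) by field.
  apply Rmult_le_compat_l; lra.
Qed.

Lemma exp_int (A c a b : R) (pr : Riemann_integrable (fun r => A * exp (- c * r)) a b) :
  0 < c -> a <= b -> RiemannInt pr = A / c * (exp (- c * a) - exp (- c * b)).
Proof.
  intros Hc Hab. rewrite <- RInt_Reals.
  apply is_RInt_unique.
  set (h := fun r => - (A / c) * exp (- c * r)).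
  replace (A / c * (exp (- c * a) - exp (- c * b))) with (minus (h b) (h a)).
  - apply (is_RInt_derive h). 
    + intros x _. unfold h. auto_derive; auto. field. lra.
    + intros x _. apply (ex_derive_continuous (K := R_AbsRing) (V := R_NormedModule)). auto_derive. auto.
  - unfold h, minus, plus, opp. simpl. field. lra.
Qed.

Lemma Ff_CD (K c n : R) : 0 < K -> 0 < c -> 0 < n -> is_CD_function (Ff K c n).
Proof.
  intros HK Hc Hn.
  assert (Hint : forall a b, 1 <= a -> a <= b -> Riemann_integrable (fun r => / Ff K c n r) a b)
    by (intros; apply Ff_int; auto).
  split; [|split; [|split; [|split; [|split]]]].
  - intros x Hx. pose proof (Ff_cont K c n x) as H.
    unfold continuity_pt, continue_in, limit1_in, limit_in in H.
    intros eps Heps. destruct (H eps Heps) as [alp [Halp Hal]].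
    exists alp; split; auto. intros y [Hy Hd].
    destruct (Req_dec y x) as [->|Hne].
    + simpl. unfold R_dist. rewrite Rminus_diag, Rabs_R0. lra.
    + apply Hal. split; auto. split; auto. unfold no_cond; auto.
  - intros x Hx. unfold Ff. apply Rmult_le_pos; [lra|]. apply psi_nonneg; auto.
  - apply Ff_0; auto.
  - intros x y Hx Hxy. apply Ff_ratio; auto.
  - intros b Hb. constructor. apply Hint; lra.
  - set (R1 := Rmax 1 (ln (2 * (n + 1)) / (2 * c))).
    assert (HR1 : 1 <= R1) by apply Rmax_l.
    assert (HR1' : ln (2 * (n + 1)) / (2 * c) <= R1) by apply Rmax_r.
    set (prR1 := Hint 1 R1 (Rle_refl 1) HR1).
    set (B := RiemannInt prR1 + 2 / K / c * exp (- c * R1)).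
    assert (Hbound : forall b (pr : Riemann_integrable (fun r => / Ff K c n r) 1 b), 1 <= b ->
              RiemannInt pr <= B).
    { intros b pr Hb. pose proof (exp_pos (- c * R1)).
      assert (0 <= 2 / K / c * exp (- c * R1)).
      { apply Rmult_le_pos; [|lra]. unfold Rdiv. apply Rmult_le_pos; [|left; apply Rinv_0_lt_compat; auto].
        apply Rmult_le_pos; [lra|left; apply Rinv_0_lt_compat; auto]. }
      destruct (Rle_dec b R1) as [HbR|HbR].
      - pose proof (RiemannInt_P26 pr (Hint b R1 Hb HbR) prR1) as E.
        pose proof (Ff_int_nonneg K c n b R1 (Hint b R1 Hb HbR) HK Hc Hn Hb HbR).
        unfold B. lra.
      - assert (HRb : R1 <= b) by lra.
        pose proof (RiemannInt_P26 prR1 (Hint R1 b HR1 HRb) pr) as E.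
        assert (prg : Riemann_integrable (fun r => 2 / K * exp (- c * r)) R1 b).
        { apply continuity_implies_RiemannInt; auto. intros x _.
          apply derivable_continuous_pt. exists (2 / K * (- c * exp (- c * x))).
          apply is_derive_Reals. auto_derive; auto. ring. }
        pose proof (RiemannInt_P19 (Hint R1 b HR1 HRb) prg HRb) as Hle.
        rewrite (exp_int (2 / K) c R1 b prg Hc HRb) in Hle.
        assert (Hle2 : RiemannInt (Hint R1 b HR1 HRb) <= 2 / K / c * (exp (- c * R1) - exp (- c * b))).
        { apply Hle. intros x Hx.
          pose proof (Ff_lower K c n x HK Hc Hn ltac:(lra)) as HL.
          pose proof (exp_pos (c * x)).
          assert (0 < K * exp (c * x) / 2) by (apply Rmult_lt_0_compat; [apply Rmult_lt_0_compat|]; lra).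
          apply Rle_trans with (/ (K * exp (c * x) / 2)).
          - apply Rinv_le_contravar; auto.
          - assert (exp (- c * x) * exp (c * x) = 1)
              by (rewrite <- exp_plus; replace (- c * x + c * x) with 0 by ring; apply exp_0).
            right. field_simplify_eq; [|split; lra]. nra. }
        pose proof (exp_pos (- c * b)).
        assert (2 / K / c * exp (- c * b) >= 0).
        { apply Rle_ge. apply Rmult_le_pos; [|lra]. unfold Rdiv. apply Rmult_le_pos; [|left; apply Rinv_0_lt_compat; auto].
          apply Rmult_le_pos; [lra|left; apply Rinv_0_lt_compat; auto]. }
        unfold B. lra. }
    set (E := fun y => exists b, 1 <= b /\ exists pr : Riemann_integrable (fun r => / Ff K c n r) 1 b,
                  y = RiemannInt pr).
    destruct (completeness E) as [l [Hub Hlub]].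
    + exists B. intros y [b [Hb [pr ->]]]. apply Hbound; auto.
    + exists (RiemannInt (Hint 1 1 (Rle_refl 1) (Rle_refl 1))). exists 1. split; [lra|]. eexists; reflexivity.
    + exists l. intros eps Heps.
      destruct (classic (exists y, E y /\ l - eps < y)) as [[y [[b0 [Hb0 [pr0 ->]]] Hy]]|Hno].
      * exists b0. intros b Hb pr.
        pose proof (RiemannInt_P26 pr0 (Hint b0 b Hb0 Hb) pr) as Eq.
        pose proof (Ff_int_nonneg K c n b0 b (Hint b0 b Hb0 Hb) HK Hc Hn Hb0 Hb).
        assert (RiemannInt pr <= l) by (apply Hub; exists b; split; [lra|]; exists pr; reflexivity).
        apply Rabs_def1; lra.
      * exfalso. assert (l <= l - eps); [|lra].
        apply Hlub. intros y Hy. destruct (Rle_dec y (l - eps)) as [Hle|Hgt]; auto.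
        exfalso. apply Hno. exists y. split; auto. lra.
Qed.

Theorem theorem3p11 (V : Type) (adj : V -> V -> Prop) (nb : V -> list V)
  (D : nat) (mu : V -> R) (mu0 : R) :
  simple_graph adj ->
  D_regular adj nb D ->
  ricci_flat adj D ->
  (2 <= D)%nat ->
  0 < mu0 ->
  (forall y, mu y = mu0) ->
  is_CD_function (F_RF D mu0) /\
  strictly_convex_nonneg (F_RF D mu0) /\
  satisfies_CD0 adj nb mu (F_RF D mu0).
Proof.
  intros Hsg Hreg Hrf HD Hmu0 Hmu.
  assert (HD2 : 2 <= INR D) by (replace 2 with (INR 2) by reflexivity; apply le_INR; lia).
  assert (HF : F_RF D mu0 = Ff (INR D / mu0 ^ 2) (mu0 / INR D) (INR D - 1)).
  { apply functional_extensionality. intro a. rewrite F_RF_eq by auto. reflexivity. }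
  assert (HK : 0 < INR D / mu0 ^ 2) by (apply Rdiv_lt_0_compat; [lra|]; apply pow_lt; auto).
  assert (Hc : 0 < mu0 / INR D) by (apply Rdiv_lt_0_compat; lra).
  assert (Hn : 0 < INR D - 1) by lra.
  split; [|split].
  - rewrite HF. apply Ff_CD; auto.
  - rewrite HF. apply Ff_strict_convex; auto.
  - intros x v Hpos Hmax. rewrite F_RF_eq by auto. apply Rle_ge.
    apply (main_ineq adj nb D mu mu0); auto.
Qed.
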